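(* Let $f(n,k)$ be the number of sets of exactly $k$ distinct integers $1\le p_1<p_2<\cdots<p_k\le n$ with $p_1+\cdots+p_j\le p_{j+1}$ for $1\le j\le k-1$. Then $f(n,0)=1$ for all $n\ge0$, and for $n\ge1$, $k\ge1$, $$f(n,k)=\sum_{p=0}^{\min\{k-1,\,n-\gamma(k)\}}\ \sum_{m=p}^{n-\gamma(k)}\bigl(n-\gamma(k)+1-m\bigr)\,a(m,p),$$ where an empty sum (in particular when $n<\gamma(k)$) is $0$.
   Context: A partition $n=p_1+\cdots+p_k$ with $1\le p_1\le\cdots\le p_k$ is non-squashing if $p_1+\cdots+p_j\le p_{j+1}$ for all $1\le j\le k-1$. $a(m,p)$ is the number of non-squashing partitions of $m$ into exactly $p$ parts (with $a(0,0)=1$ for the empty partition and $a(m,0)=0$ for $m\ge1$). The function $\gamma$ is defined by $\gamma(i)=i$ for $1\le i\le3$ and $\gamma(i)=3\cdot2^{i-3}$ for $i\ge3$ (so $\gamma$ takes values $1,2,3,6,12,24,\dots$). *)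

(* Defs.v *)
From mathcomp Require Import all_boot.
Set Implicit Arguments. Unset Strict Implicit. Unset Printing Implicit Defensive.

(* Non-squashing condition on a sequence s = [:: p_1; ...; p_k]:
   p_1 + ... + p_j <= p_{j+1} for all 1 <= j <= k-1
   (nth uses 0-based indices: p_{j+1} = nth 0 s j, p_1+...+p_j = sumn (take j s)). *)
Definition nonsquash (s : seq nat) : bool :=
  all (fun j => sumn (take j s) <= nth 0 s j) (iota 1 (size s).-1).

Definition a (m p : nat) : nat :=
  #|[set t : p.-tuple 'I_m.+1 |
      let s := map (@nat_of_ord _) t in
      [&& sumn s == m, all (fun x => 0 < x) s, sorted leq s & nonsquash s]]|.

Definition gamma (i : nat) : nat := if i <= 3 then i else 3 * 2 ^ (i - 3).

Definition f (n k : nat) : nat :=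
  #|[set t : k.-tuple 'I_n.+1 |
      let s := map (@nat_of_ord _) t in
      [&& all (fun x => 0 < x) s, sorted ltn s & nonsquash s]]|.

(* Main.v *)
Require Import Defs.
From mathcomp Require Import all_boot zify.
Set Implicit Arguments. Unset Strict Implicit. Unset Printing Implicit Defensive.

Fixpoint lists (r b : nat) : seq (seq nat) :=
  if r is r'.+1 then [seq x :: s | x <- iota 0 b, s <- lists r' b] else [:: [::]].

Lemma big_lists_cons r b (F : seq nat -> nat) :
  \sum_(s <- lists r.+1 b) F s = \sum_(0 <= x < b) \sum_(s <- lists r b) F (x :: s).
Proof. by rewrite /= big_allpairs_dep /= /index_iota subn0. Qed.

Lemma big_lists0 b (F : seq nat -> nat) : \sum_(s <- lists 0 b) F s = F [::].
Proof. by rewrite /= big_seq1. Qed.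

Lemma mem_lists r b s : (s \in lists r b) = (size s == r) && all (fun x => x < b) s.
Proof.
elim: r s => [|r IH] [|x s] //=.
  apply/negbTE/allpairsP => -[[y t] [_ _ /=]] //.
rewrite eqSS. apply/allpairsP/idP.
  case=> -[y t] /= [Hy Ht [-> ->]]. rewrite mem_iota /= add0n in Hy.
  by rewrite Hy -IH Ht.
move=> /andP[Hs /andP [Hx Ha]]. exists (x, s) => /=; split => //.
  by rewrite mem_iota.
by rewrite IH Hs Ha.
Qed.

Lemma uniq_lists r b : uniq (lists r b).
Proof.
elim: r => [|r IH] //=. apply: allpairs_uniq => //; first exact: iota_uniq.
by move=> [x s] [y t] _ _ /= [-> ->].
Qed.

Arguments lists : simpl never.

Lemma card_lists r b' (P : seq nat -> bool) :
  #|[set t : r.-tuple 'I_b'.+1 | P (map (@nat_of_ord _) t)]| = \sum_(s <- lists r b'.+1) P s.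
Proof.
rewrite -sum1_card big_mkcond /=.
rewrite (eq_bigr (fun t : r.-tuple 'I_b'.+1 => nat_of_bool (P (map (@nat_of_ord _) t)))); last first.
  by move=> i _; rewrite inE; case: (P _).
rewrite -(big_map (fun t : r.-tuple 'I_b'.+1 => map (@nat_of_ord _) t) xpredT (fun s => nat_of_bool (P s))).
apply: perm_big. apply: uniq_perm.
- rewrite map_inj_uniq ?index_enum_uniq //.
  move=> t1 t2 /= H. apply: val_inj. exact: (inj_map val_inj H).
- exact: uniq_lists.
move=> s. rewrite mem_lists. apply/mapP/idP.
  case=> t _ ->. rewrite size_map size_tuple eqxx /=.
  apply/allP => x /mapP [y _ ->]. exact: ltn_ord.
move=> /andP [/eqP Hs Ha].
have Hsz : size (map (@inord b') s) == r by rewrite size_map Hs.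
exists (Tuple Hsz); first by rewrite mem_index_enum.
rewrite /= -map_comp. rewrite -[LHS]map_id. apply/eq_in_map => x Hx /=.
by rewrite inordK //; apply: (allP Ha).
Qed.

Fixpoint ns (c : nat) (s : seq nat) : bool :=
  if s is y :: s' then (c <= y) && ns (c + y) s' else true.

Lemma ns_all c s :
  all (fun j => c + sumn (take j s) <= nth 0 s j) (iota 0 (size s)) = ns c s.
Proof.
elim: s c => [|y s IH] c //=.
rewrite addn0 -IH. congr andb.
rewrite -(addn0 1) iotaDl all_map. apply: eq_all => j /=.
by rewrite !add0n addnA.
Qed.

Lemma nonsquash_cons x s : nonsquash (x :: s) = ns x s.
Proof.
rewrite /nonsquash /= -ns_all -(addn0 1) iotaDl all_map. apply: eq_all => j /=.
by rewrite ?add0n ?add1n ?addn0 /=.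
Qed.

Lemma nonsquash0 s : nonsquash s = ns 0 s.
Proof. by case: s => [|x s] //; rewrite nonsquash_cons. Qed.

Lemma sum_shift (F : nat -> nat) G n : (forall x, x < G -> F x = 0) ->
  \sum_(0 <= x < n) F x = \sum_(0 <= y < n - G) F (y + G).
Proof.
move=> HF. case: (leqP G n) => HG.
  rewrite (@big_cat_nat _ _ _ G) //= big1_seq ?add0n; last first.
    by move=> x /andP [_]; rewrite mem_iota add0n subn0 => /andP [_ Hx]; exact: HF.
  by rewrite -[in index_iota G n](add0n G) big_addn.
rewrite big1_seq; last first.
  move=> x /andP [_]; rewrite mem_iota add0n subn0 => /andP [_ Hx]; apply: HF.
  exact: (ltn_trans Hx HG).
by rewrite (eqP (ltnW HG)) big_geq.
Qed.

Lemma sum_ext (F : nat -> nat) a b : b <= a ->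
  (forall y, b <= y -> y < a -> F y = 0) ->
  \sum_(0 <= y < a) F y = \sum_(0 <= y < b) F y.
Proof.
move=> Hba HF. rewrite (@big_cat_nat _ _ _ b) //= [X in _ + X]big1_seq ?addn0 //.
by move=> y /andP [_]; rewrite mem_iota subnKC // => /andP [H1 H2]; exact: HF.
Qed.

Lemma count_ge a N : \sum_(0 <= x < N.+1) (a <= x) = N.+1 - a.
Proof.
elim: N => [|N IH]; first by rewrite big_nat1; case: a.
rewrite big_nat_recr //= IH. case: (leqP a N.+1) => H.
  simpl; lia.
simpl; lia.
Qed.

Lemma pick_sum a N (g : nat -> nat) : (forall m, g m = N.+1 - m) ->
  N.+1 - a = \sum_(0 <= m < N.+1) (a == m) * g m.
Proof.
move=> Hg. case: (leqP a N) => H.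
  rewrite (bigD1_seq a) ?iota_uniq ?mem_iota //= eqxx mul1n Hg big1 ?addn0 //.
  by move=> i /negbTE; rewrite eq_sym => ->.
rewrite big1_seq; first by apply/eqP; rewrite subn_eq0.
move=> m /andP [_]; rewrite mem_iota add0n subn0 => /andP [_ Hm].
case: eqP => [E|//]; subst; exfalso; lia.
Qed.

Lemma sum_andl (r : seq (seq nat)) (b : bool) (P : seq nat -> bool) :
  \sum_(s <- r) ((b && P s) : nat) = b * \sum_(s <- r) (P s : nat).
Proof. by case: b; rewrite ?mul1n ?mul0n // big1. Qed.

Lemma ns_rcons c s x : ns c (rcons s x) = ns c s && (c + sumn s <= x).
Proof.
elim: s c => [|y s IH] c /=; first by rewrite addn0 andbT.
by rewrite IH andbA addnA.
Qed.

Lemma ns_path_leq s : forall c d, d <= c -> ns c s -> path leq d s.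
Proof.
elim: s => [|y s IH] c d //= Hdc /andP [Hcy Hs].
rewrite (leq_trans Hdc Hcy) /=. apply: (IH (c + y)) => //. exact: leq_addl.
Qed.

Lemma ns_path_ltn s : forall c lo, 0 < c -> lo < c -> ns c s -> path ltn lo s.
Proof.
elim: s => [|y s IH] c lo //= Hc Hlo /andP [Hcy Hs].
rewrite (leq_trans Hlo Hcy) /=. apply: (IH (c + y)) => //.
  by rewrite addn_gt0 Hc.
by rewrite -addn1 addnC leq_add2r.
Qed.

Lemma path_ltn_pos lo s : path ltn lo s -> all (fun y => 0 < y) s.
Proof.
elim: s lo => [|y s IH] lo //= /andP [H1 H2].
by rewrite (leq_ltn_trans _ H1) // (IH y).
Qed.

Lemma path_leq_pos x s : 0 < x -> path leq x s -> all (fun y => 0 < y) s.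
Proof.
elim: s x => [|y s IH] x //= Hx /andP [H1 H2].
have Hy : 0 < y by exact: leq_trans Hx H1.
by rewrite Hy (IH y).
Qed.

Lemma tail_zero t : forall c G n, G <= c -> n < G * 2 ^ t ->
  \sum_(s <- lists t.+1 n.+1) ns c s = 0.
Proof.
elim: t => [|t IH] c G n HGc Hn; rewrite big_lists_cons big1_seq //;
  move=> x /andP [_]; rewrite mem_iota add0n subn0 => /andP [_ Hx].
  rewrite big_lists0 /= andbT. apply/eqP; rewrite eqb0 -ltnNge.
  rewrite muln1 in Hn. apply: leq_trans Hx _. exact: leq_trans Hn HGc.
rewrite /= sum_andl. case: (leqP c x) => Hcx; last by rewrite mul0n.
rewrite (IH (c + x) (G * 2)) ?muln0 //.
  by rewrite muln2 -addnn leq_add // (leq_trans HGc).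
by rewrite -mulnA -expnS.
Qed.

Lemma tail_main t : forall e G lo M, 0 < G -> lo < e + G ->
  \sum_(s <- lists t.+1 (M + G * 2 ^ t).+1) (path ltn lo s && ns (e + G) s)
  = \sum_(s <- lists t.+1 M.+1) ns e s.
Proof.
elim: t => [|t IH] e G lo M HG Hlo; rewrite !big_lists_cons (@sum_shift _ G).
- rewrite expn0 muln1 -addSn addnK. apply: eq_bigr => y _.
  rewrite /= !big_seq1 /= !andbT leq_add2r.
  case: (leqP e y) => Hey; last by rewrite andbF.
  rewrite andbT (_ : lo < y + G) //. apply: leq_trans Hlo _.
  by rewrite leq_add2r.
- move=> x Hx. rewrite big1 // => s _ /=.
  apply/eqP; rewrite eqb0 negb_and; apply/orP; right.
  rewrite negb_and -ltnNge; apply/orP; left. exact: leq_trans Hx (leq_addl _ _).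
- have key : forall y,
    \sum_(s <- lists t.+1 (M + G * 2 ^ t.+1).+1) (path ltn lo (y + G :: s) && ns (e + G) (y + G :: s))
    = (e <= y) * \sum_(s <- lists t.+1 M.+1) ns (e + y) s.
    move=> y /=. under eq_bigr => s _ do rewrite andbACA.
    rewrite sum_andl leq_add2r.
    case: (leqP e y) => Hey; last by rewrite andbF.
    rewrite andbT (_ : lo < y + G); last first.
      apply: leq_trans Hlo _. by rewrite leq_add2r.
    rewrite mul1n -(IH (e + y) (G * 2) (y + G) M) ?muln_gt0 ?HG //; last by lia.
    have -> : e + G + (y + G) = e + y + G * 2 by lia.
    by rewrite -mulnA -expnS mul1n.
  under eq_bigr => y _ do rewrite key.
  rewrite (@sum_ext _ _ M.+1).
  + apply: eq_bigr => y _ /=. by rewrite sum_andl.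
  + have : G <= G * 2 ^ t.+1 by rewrite leq_pmulr // expn_gt0.
    lia.
  + move=> y Hy _. rewrite (@tail_zero t (e + y) M.+1 M) ?muln0 //.
      exact: leq_trans Hy (leq_addl _ _).
    have : 0 < 2 ^ t by rewrite expn_gt0. by nia.
- move=> x Hx. rewrite big1 // => s _ /=.
  apply/eqP; rewrite eqb0 negb_and; apply/orP; right.
  rewrite negb_and -ltnNge; apply/orP; left. exact: leq_trans Hx (leq_addl _ _).
Qed.

Definition Af (s : seq nat) : bool :=
  [&& all (fun x => 0 < x) s, sorted ltn s & nonsquash s].

Lemma f_sum n k : f n k = \sum_(s <- lists k n.+1) Af s.
Proof. exact: (card_lists k n Af). Qed.

Lemma Af_cons2 x z s : Af (x :: z :: s) = ((0 < x) && (x < z)) && (path ltn z s && ns (x + z) s).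
Proof.
rewrite /Af nonsquash_cons /=.
case: (ltnP 0 x) => Hx //=; case: (ltnP x z) => Hxz /=; last by rewrite !andbF.
case Hp: (path ltn z s) => /=; last by rewrite !andbF.
by rewrite (path_ltn_pos Hp) (ltnW Hxz) (leq_ltn_trans (leq0n x) Hxz).
Qed.

Lemma Af_cons1 x : Af [:: x] = (0 < x).
Proof. by rewrite /Af nonsquash_cons /= !andbT. Qed.

Lemma HR (F : nat -> nat -> nat) n : 0 < n ->
  \sum_(0 <= x < n.+1) \sum_(0 <= z < n.+1) (((0 < x) && (x < z)) * F x z)
  = \sum_(0 <= y1 < n.-1) \sum_(0 <= y2 < n.-1) ((y1 <= y2) * F (y1 + 1) (y2 + 2)).
Proof.
move=> Hn. rewrite (@sum_shift _ 1); last first.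
  by move=> x; rewrite ltnS leqn0 => /eqP ->; rewrite big1.
rewrite subn1 /= (@sum_ext _ n n.-1); last first.
- move=> y Hy _. rewrite big1_seq //= => z.
  rewrite mem_iota add0n subn0 => /andP [_ Hz].
  rewrite (_ : y + 1 < z = false) ?andbF //. apply/negbTE; rewrite -leqNgt.
  lia.
- lia.
apply: eq_bigr => y1 _. rewrite (@sum_shift _ 2); last first.
  by move=> z Hz; rewrite (_ : y1 + 1 < z = false) ?andbF //; apply/negbTE; rewrite -leqNgt; lia.
rewrite subn2 /=. apply: eq_bigr => y2 _. congr (_ * _).
by rewrite addn_gt0 orbT /= addn2 addn1 ltnS ltnS.
Qed.

Lemma gamma3 t : gamma t.+3 = 3 * 2 ^ t.
Proof. by case: t => [|t] //; rewrite /gamma /= subSS subn0. Qed.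

Lemma f1 n : f n 1 = n.
Proof.
rewrite f_sum big_lists_cons.
under eq_bigr => x _ do rewrite big_lists0 Af_cons1.
by rewrite count_ge subn1.
Qed.

Lemma ns1 b : \sum_(s <- lists 1 b) nonsquash s = b.
Proof.
rewrite big_lists_cons.
under eq_bigr => x _ do rewrite big_lists0 nonsquash_cons /=.
by rewrite sum_nat_const_nat muln1 subn0.
Qed.

Lemma f2_eq n : 0 < n ->
  f n 2 = \sum_(0 <= y1 < n.-1) \sum_(0 <= y2 < n.-1) (y1 <= y2).
Proof.
move=> Hn. rewrite f_sum big_lists_cons.
transitivity (\sum_(0 <= x < n.+1) \sum_(0 <= z < n.+1) (((0 < x) && (x < z)) * (fun _ _ => 1) x z)).
  apply: eq_bigr => x _; rewrite big_lists_cons; apply: eq_bigr => z _.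
  by rewrite big_lists0 Af_cons2 /= andbT muln1.
rewrite HR //. apply: eq_bigr => y1 _; apply: eq_bigr => y2 _; by rewrite muln1.
Qed.

Lemma ns2 b : \sum_(s <- lists 2 b) nonsquash s = \sum_(0 <= y1 < b) \sum_(0 <= y2 < b) (y1 <= y2).
Proof.
rewrite big_lists_cons. apply: eq_bigr => y1 _; rewrite big_lists_cons; apply: eq_bigr => y2 _.
by rewrite big_lists0 nonsquash_cons /= andbT.
Qed.

Lemma f3_eq n t : 0 < n ->
  f n t.+3 = \sum_(0 <= y1 < n.-1) \sum_(0 <= y2 < n.-1)
    ((y1 <= y2) * \sum_(s <- lists t.+1 n.+1) (path ltn (y2 + 2) s && ns (y1 + y2 + 3) s)).
Proof.
move=> Hn. rewrite f_sum big_lists_cons.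
transitivity (\sum_(0 <= x < n.+1) \sum_(0 <= z < n.+1) (((0 < x) && (x < z)) *
   (fun x z => \sum_(s <- lists t.+1 n.+1) (path ltn z s && ns (x + z) s)) x z)).
  apply: eq_bigr => x _; rewrite big_lists_cons; apply: eq_bigr => z _.
  under eq_bigr => s _ do rewrite Af_cons2.
  by rewrite sum_andl.
rewrite HR //. apply: eq_bigr => y1 _; apply: eq_bigr => y2 _.
by rewrite (_ : y1 + 1 + (y2 + 2) = y1 + y2 + 3) //; lia.
Qed.

Lemma sum_and_le (r : seq (seq nat)) (P Q : seq nat -> bool) :
  \sum_(s <- r) ((P s && Q s) : nat) <= \sum_(s <- r) (Q s : nat).
Proof. by apply: leq_sum => s _; case: (P s); case: (Q s). Qed.

Lemma f3_zero n t : 0 < n -> n < 3 * 2 ^ t -> f n t.+3 = 0.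
Proof.
move=> Hn Hlt. rewrite f3_eq // big1 // => y1 _; rewrite big1 // => y2 _.
apply/eqP; rewrite muln_eq0; apply/orP; right.
rewrite -leqn0; apply: leq_trans (sum_and_le _ _ _) _.
by rewrite (@tail_zero t (y1 + y2 + 3) 3 n) ?leq_addl.
Qed.

Lemma ns3 t b : \sum_(s <- lists t.+3 b) nonsquash s =
  \sum_(0 <= y1 < b) \sum_(0 <= y2 < b) ((y1 <= y2) * \sum_(s <- lists t.+1 b) ns (y1 + y2) s).
Proof.
rewrite big_lists_cons. apply: eq_bigr => y1 _; rewrite big_lists_cons; apply: eq_bigr => y2 _.
under eq_bigr => s _ do rewrite nonsquash_cons /=.
by rewrite sum_andl.
Qed.

Lemma f3_main M t : f (M + 3 * 2 ^ t) t.+3 = \sum_(s <- lists t.+3 M.+1) nonsquash s.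
Proof.
have Hpos : 0 < 2 ^ t by rewrite expn_gt0.
rewrite f3_eq; last by lia.
rewrite ns3.
have Hlo : forall y1 y2, y2 + 2 < y1 + y2 + 3 by move=> *; lia.
under eq_bigr => y1 _ do under eq_bigr => y2 _ do
  rewrite (@tail_main t (y1 + y2) 3 (y2 + 2) M erefl (Hlo y1 y2)).
have Z : forall y1 y2, M < y1 + y2 -> \sum_(s <- lists t.+1 M.+1) ns (y1 + y2) s = 0.
  move=> y1 y2 H. apply: (@tail_zero t _ M.+1) => //. nia.
rewrite (@sum_ext _ _ M.+1); last 2 first.
- lia.
- move=> y1 Hy1 _. rewrite big1 // => y2 _. rewrite Z ?muln0 //; lia.
apply: eq_bigr => y1 _. rewrite (@sum_ext _ _ M.+1) //; first by lia.
move=> y2 Hy2 _. rewrite Z ?muln0 //; lia.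
Qed.

Lemma head n k : 1 <= n -> 1 <= k ->
  f n k = if n < gamma k then 0 else \sum_(s <- lists k (n - gamma k).+1) nonsquash s.
Proof.
move=> Hn. case: k => [//|[|[|t]]] _.
- rewrite /gamma /= ltnNge Hn /= f1 ns1. lia.
- rewrite /gamma /= f2_eq //. case: ltnP => H.
    by rewrite (_ : n = 1) ?big_geq //; lia.
  by rewrite ns2 (_ : n.-1 = (n - 2).+1) //; lia.
- rewrite gamma3. case: ltnP => H; first exact: f3_zero.
  by rewrite -f3_main subnK.
Qed.

Lemma big_lists_rcons r b (F : seq nat -> nat) :
  \sum_(s <- lists r.+1 b) F s = \sum_(s <- lists r b) \sum_(0 <= x < b) F (rcons s x).
Proof.
elim: r F => [|r IH] F.
  by rewrite big_lists_cons big_lists0; apply: eq_bigr => x _; rewrite big_lists0.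
rewrite big_lists_cons (big_lists_cons r b (fun s => \sum_(0 <= x < b) F (rcons s x))). apply: eq_bigr => y _.
by rewrite IH.
Qed.

Lemma nonsquash_rcons s x : nonsquash (rcons s x) = nonsquash s && (sumn s <= x).
Proof. by rewrite !nonsquash0 ns_rcons add0n. Qed.

Definition cc N m r := \sum_(s <- lists r N.+1) (nonsquash s && (sumn s == m)).

Lemma R1 r N : \sum_(s <- lists r.+1 N.+1) nonsquash s
  = \sum_(0 <= m < N.+1) (N.+1 - m) * cc N m r.
Proof.
rewrite big_lists_rcons.
transitivity (\sum_(s <- lists r N.+1) \sum_(0 <= m < N.+1)
   ((nonsquash s && (sumn s == m)) * (N.+1 - m))).
  apply: eq_bigr => s _.
  under eq_bigr => x _ do rewrite nonsquash_rcons.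
  case: (nonsquash s) => /=; last first.
    by rewrite !big1.
  rewrite count_ge (@pick_sum _ _ (fun m => N.+1 - m)) //.
rewrite exchange_big /=. apply: eq_bigr => m _.
by rewrite /cc big_distrr /=; apply: eq_bigr => s _; rewrite mulnC.
Qed.

Definition Ap m (s : seq nat) : bool :=
  [&& sumn s == m, all (fun x => 0 < x) s, sorted leq s & nonsquash s].

Lemma a_sum m p : a m p = \sum_(s <- lists p m.+1) Ap m s.
Proof. exact: (card_lists p m (Ap m)). Qed.

Lemma le_sumn s y : y \in s -> y <= sumn s.
Proof.
elim: s => //= x s IH; rewrite in_cons => /orP [/eqP ->|/IH H].
  exact: leq_addr.
exact: leq_trans H (leq_addl _ _).
Qed.

Lemma BC r : forall b b' (P : seq nat -> bool), b <= b' ->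
  (forall s, P s -> all (fun x => x < b) s) ->
  \sum_(s <- lists r b) P s = \sum_(s <- lists r b') P s.
Proof.
elim: r => [|r IH] b b' P Hb HP; first by rewrite !big_lists0.
rewrite !big_lists_cons (@big_cat_nat _ _ _ b 0 b') //=.
rewrite [X in _ = _ + X]big1_seq ?addn0.
  apply: eq_bigr => x _. apply: IH => // s /HP /= /andP [] //.
move=> x /andP [_]; rewrite mem_iota subnKC // => /andP [Hx _].
rewrite big1 // => s _. case E: (P (x :: s)) => //.
by move: (HP _ E) => /= /andP []; rewrite ltnNge Hx.
Qed.

Lemma a_sumN m p N : m <= N -> a m p = \sum_(s <- lists p N.+1) Ap m s.
Proof.
move=> H. rewrite a_sum. apply: BC => // s /and4P [/eqP Hs _ _ _].
apply/allP => y Hy. rewrite ltnS -Hs. exact: le_sumn.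
Qed.

Lemma split_head m x s :
  (nonsquash (x :: s) && (sumn (x :: s) == m) : nat) =
  ((x == 0) && (nonsquash s && (sumn s == m)) : nat) + Ap m (x :: s).
Proof.
rewrite /Ap /= nonsquash_cons. case: x => [|x] /=.
  by rewrite add0n andbF -nonsquash0 /= addn0.
have Hp : ns x.+1 s -> path leq x.+1 s by apply: ns_path_leq.
case E: (ns x.+1 s); last by rewrite !andbF.
by rewrite (path_leq_pos _ (Hp E)) // (Hp E) /= !andbT.
Qed.

Lemma R2 N m r : m <= N -> cc N m r = \sum_(0 <= p < r.+1) a m p.
Proof.
move=> Hm. elim: r => [|r IH].
  by rewrite big_nat1 (a_sumN _ Hm) /cc !big_lists0 /Ap /= andbT.
rewrite big_nat_recr //= -IH (a_sumN _ Hm) /cc big_lists_cons (big_lists_cons r).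
under eq_bigr => x _ do (under eq_bigr => s _ do rewrite split_head; rewrite big_split /=).
rewrite big_split /=. congr (_ + _).
rewrite big_nat_recl // [X in _ + X = _]big1; last by move=> x _; rewrite big1.
by rewrite addn0.
Qed.

Lemma size_le_sumn s : all (fun x => 0 < x) s -> size s <= sumn s.
Proof. elim: s => //= x s IH /andP [Hx /IH H]. by rewrite -add1n leq_add. Qed.

Lemma a_zero m p : m < p -> a m p = 0.
Proof.
move=> H. rewrite a_sum big1_seq // => s /andP [Hs]. rewrite mem_lists => /andP [/eqP Hsz _].
case E: (Ap m s) => //. move: E => /and4P [/eqP Hsum Hpos _ _].
have := size_le_sumn Hpos. rewrite Hsz Hsum => H2. by rewrite ltnNge H2 in H.
Qed.

Lemma final N r :
  \sum_(0 <= m < N.+1) (N.+1 - m) * cc N m r =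
  \sum_(0 <= p < (minn r N).+1) \sum_(p <= m < N.+1) (N.+1 - m) * a m p.
Proof.
transitivity (\sum_(0 <= p < (minn r N).+1) \sum_(0 <= m < N.+1) (N.+1 - m) * a m p); last first.
  apply: eq_big_nat => p /andP [_ Hp].
  have HpN : p <= N by move: Hp; rewrite ltnS leq_min => /andP [].
  rewrite (@big_cat_nat _ _ _ p 0 N.+1) //=; last exact: leqW.
  rewrite big1_seq ?add0n // => m /andP [_]; rewrite mem_iota add0n subn0 => /andP [_ Hm].
  by rewrite a_zero ?muln0.
rewrite -[in RHS](@sum_ext _ r.+1 (minn r N).+1); last 2 first.
- by rewrite ltnS geq_minl.
- move=> y Hy Hy2. rewrite big1_seq // => m /andP [_]; rewrite mem_iota add0n subn0 => /andP [_ Hm].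
  rewrite a_zero ?muln0 //. apply: leq_trans Hm _.
  case: (leqP r N) => HrN.
    rewrite (minn_idPl HrN) in Hy; lia.
  by rewrite (minn_idPr (ltnW HrN)) in Hy.
rewrite exchange_big /=. apply: eq_big_nat => m /andP [_ Hm].
by rewrite -big_distrr /= R2.
Qed.

Theorem theorem8 :
  (forall n : nat, f n 0 = 1) /\
  (forall n k : nat, 1 <= n -> 1 <= k ->
     f n k =
       (if n < gamma k then 0
        else \sum_(0 <= p < (minn (k - 1) (n - gamma k)).+1)
               \sum_(p <= m < (n - gamma k).+1)
                  (n - gamma k + 1 - m) * a m p)).
Proof.
split.
  by move=> n; rewrite f_sum big_lists0.
move=> n k Hn Hk. rewrite head //. case: ltnP => // H.
case: k Hk H => [//|r] _ H.
by rewrite R1 final subn1 /= addn1.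
Qed.
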